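(* Let $H$ be a graph, let $\kappa=1+1/v(H)$, and let $0<\delta<1/4$ satisfy $1-2\delta>\delta^{1-1/\kappa}$. For every $0<c<1/2$, $\beta>0$ and positive integer $d$ there are $C,\varepsilon>0$ such that the following holds. Let $\Gamma$ be a $(c,t)$-sparse graph with $n$ vertices and let $G\subseteq\Gamma$ be a $\delta$-reduced bipartite subgraph of $\Gamma$ with parts $U,R$, $|U|=m$, $|R|=r$, and at least $C r m^{1-1/d}t^{1/d}$ edges. Then, with probability at least $1/2$ over a uniformly chosen $u\in U$, the set $\{u\}$ is $(\beta,\varepsilon,k)$-good for all $k\le d$.
   Context: A graph $\Gamma$ is $(c,t)$-sparse if for every pair of (not necessarily disjoint) vertex subsets $A,B\subseteq V(\Gamma)$ with $|A|,|B|\ge t$ we have $e(A,B)\le (1-c)|A||B|$, where $e(A,B)$ counts ordered pairs $(a,b)\in A\times B$ with $\{a,b\}\in E(\Gamma)$. For a set $S$ of vertices, $d_{\mathrm{avg}}(S)$ is its average degree; a bipartite graph with parts $U,R$ is $\delta$-reduced if every $u\in U$ has degree in $[\delta d_{\mathrm{avg}}(U),\delta^{-1}d_{\mathrm{avg}}(U)]$. $N_G(S)=\bigcap_{v\in S}N_G(v)$ is the common neighborhood and $N^+_\Gamma(S)=\bigcup_{v\in S}N_\Gamma(v)$. Let $q=e(G)/(mr)$. For $T\subseteq U$ and $\varepsilon>0$, a $k$-tuple $S$ of vertices of $R$ is $(\varepsilon,T)$-rich if $|N_G(S)\setminus N^+_\Gamma(T)|\ge \varepsilon m q^{k}$. For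 $1\le k\le d$, $T$ is $(\beta,\varepsilon,k)$-good if the number of $k$-tuples of vertices of $N_G(T)$ (entries not required to be distinct) that are not $(\varepsilon,T)$-rich is at most $\beta|N_G(T)|^k$. *)

(* Defs.v *)
From HB Require Import structures.
From mathcomp Require Import all_boot all_order all_algebra.
From mathcomp Require Import reals exp.
Set Implicit Arguments. Unset Strict Implicit. Unset Printing Implicit Defensive.
Import Order.TTheory GRing.Theory Num.Theory.
Local Open Scope ring_scope.

Section Defs.
Variables (R : realType) (V : finType).

Definition simple_graph (E : rel V) : Prop :=
  (forall x y, E x y = E y x) /\ (forall x, ~~ E x x).

Definition e_pairs (E : rel V) (A B : {set V}) : nat :=
  #|[set p : V * V | (p.1 \in A) && (p.2 \in B) && E p.1 p.2]|.

Definition sparse (E : rel V) (c t : R) : Prop :=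
  forall A B : {set V}, t <= #|A|%:R -> t <= #|B|%:R ->
    (e_pairs E A B)%:R <= (1 - c) * #|A|%:R * #|B|%:R.

Definition bipartite_subgraph (Gam G : rel V) (U Rp : {set V}) : Prop :=
  simple_graph G /\ [disjoint U & Rp] /\
  (forall x y, G x y -> Gam x y) /\
  (forall x y, G x y -> ((x \in U) && (y \in Rp)) || ((x \in Rp) && (y \in U))).

Definition bip_edges (G : rel V) (U Rp : {set V}) : nat :=
  e_pairs G U Rp.

Definition degree (G : rel V) (v : V) : nat := #|[set y | G v y]|.

Definition d_avg (G : rel V) (U Rp : {set V}) : R :=
  (bip_edges G U Rp)%:R / #|U|%:R.

Definition reduced (delta : R) (G : rel V) (U Rp : {set V}) : Prop :=
  forall u, u \in U ->
    delta * d_avg G U Rp <= (degree G u)%:R <= delta^-1 * d_avg G U Rp.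

Definition NG (G : rel V) (S : {set V}) : {set V} :=
  [set y | [forall x in S, G x y]].

Definition NplusG (Gam : rel V) (T : {set V}) : {set V} :=
  [set y | [exists x in T, Gam x y]].

Definition qdens (G : rel V) (U Rp : {set V}) : R :=
  (bip_edges G U Rp)%:R / (#|U|%:R * #|Rp|%:R).

Definition rich (Gam G : rel V) (U Rp : {set V}) (eps : R) (T : {set V})
    (k : nat) (S : {ffun 'I_k -> V}) : bool :=
  eps * #|U|%:R * (qdens G U Rp) ^+ k <=
    #|NG G [set S i | i : 'I_k] :\: NplusG Gam T|%:R.

Definition good (Gam G : rel V) (U Rp : {set V}) (beta eps : R) (k : nat)
    (T : {set V}) : bool :=
  (#|[set S : {ffun 'I_k -> V} | [forall i, S i \in NG G T] &&
        ~~ rich Gam G U Rp eps T S]|)%:R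
    <= beta * (#|NG G T|%:R) ^+ k.

End Defs.

(* Main.v *)
Require Import Defs.
From HB Require Import structures.
From mathcomp Require Import all_boot all_order all_algebra.
From mathcomp Require Import reals exp.
From mathcomp Require Import ring lra.
Import Order.TTheory GRing.Theory Num.Theory.
Local Open Scope ring_scope.

Section H.
Variables (R : realType) (V : finType).

Lemma e_pairs_sum (E : rel V) (A B : {set V}) :
  e_pairs E A B = (\sum_(x in A) #|[set y in B | E x y]|)%N.
Proof.
rewrite /e_pairs -sum1_card.
rewrite (eq_bigr (fun x => \sum_(y | (y \in B) && E x y) 1)%N); last first.
  by move=> x _; rewrite -sum1_card; apply: eq_bigl => y; rewrite inE.
rewrite pair_big_dep /=; apply: eq_bigl => p; rewrite !inE andbA.
by case: p.
Qed.

Lemma exists_set1 (Gam : rel V) x y :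
  [exists x' in [set x], Gam x' y] = Gam x y.
Proof.
apply/existsP/idP => [[x' /andP[/set1P -> ]] //| h].
by exists x; rewrite set11 h.
Qed.

Lemma card_nbr (Gam : rel V) (W : {set V}) x :
  (#|[set y in W | Gam x y]| + #|W :\: NplusG Gam [set x]|)%N = #|W|.
Proof.
rewrite -(cardsID (NplusG Gam [set x]) W); congr (_ + _)%N.
by apply: eq_card => y; rewrite !inE exists_set1.
Qed.

Lemma card_bigcup_le n (B : nat -> {set V}) :
  (#|\bigcup_(i < n) B i| <= \sum_(i < n) #|B i|)%N.
Proof.
elim: n => [|n IH]; first by rewrite !big_ord0 cards0.
rewrite !big_ord_recr /=.
apply: leq_trans (leq_card_setU _ _) _.
by rewrite leq_add2r.
Qed.

Lemma sparse_bound (Gam : rel V) (c t th : R) (X W : {set V}) :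
  sparse Gam c t -> 0 < c -> 0 < t -> c * t <= 2 * th ->
  X \subset W ->
  (forall x, x \in X -> (#|W :\: NplusG Gam [set x]|)%:R < th) ->
  (#|X|)%:R <= 2 * th / c + t.
Proof.
move=> sp c0 t0 cth XW hX.
have th0 : 0 <= 2 * th / c.
  apply: divr_ge0; last exact: ltW.
  by apply: le_trans cth; rewrite mulr_ge0 // ltW.
have tle : t <= 2 * th / c by rewrite ler_pdivlMr // mulrC.
have [Xlt|Xge] := ltP (#|X|%:R : R) t.
  by apply: ltW; apply: (lt_le_trans Xlt); rewrite lerDr.
have [Wlt|Wge] := ltP (#|W|%:R : R) (2 * th / c).
  apply: ltW; apply: (le_lt_trans _ (ltr_wpDr (ltW t0) Wlt)).
  by rewrite ler_nat subset_leq_card.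
exfalso.
have Wt : t <= #|W|%:R by apply: le_trans Wge.
have := sp X W Xge Wt.
rewrite e_pairs_sum natr_sum.
have lb : \sum_(x in X) (#|W|%:R - th) <= \sum_(x in X) (#|[set y in W | Gam x y]|%:R : R).
  apply: ler_sum => x xX.
  have := card_nbr Gam W x => /(congr1 (fun n : nat => n%:R : R)).
  rewrite natrD => <-.
  by rewrite -addrA gerDl subr_le0 ltW // hX.
move=> hsp; have := le_trans lb hsp.
rewrite sumr_const.
set x := (#|X|%:R : R); set w := (#|W|%:R : R).
have x0 : 0 < x by apply: lt_le_trans Xge.
have w0 : 0 < w by apply: lt_le_trans Wt.
have thw : th <= c * w / 2.
  rewrite ler_pdivlMr //.
  move: Wge; rewrite ler_pdivrMr // => Wge.
  by rewrite mulrC (mulrC c).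
move=> h.
have e : forall z : R, z *+ #|X| = z * x by move=> z; rewrite -mulr_natr.
rewrite e in h.
have : (w - c * w / 2) * x <= (1 - c) * x * w.
  apply: le_trans h; apply: ler_wpM2r; first exact: ltW x0.
  by rewrite lerD2l lerN2.
rewrite -subr_ge0.
have -> : (1 - c) * x * w - (w - c * w / 2) * x = - (c * x * w / 2).
  by field.
rewrite oppr_ge0 leNgt => /negP; apply.
by rewrite divr_gt0 // !mulr_gt0.
Qed.

End H.

Section Main.
Variables (R : realType) (V : finType) (Gam G : rel V) (U Rp : {set V}).
Variables (c t eps beta delta : R).
Hypothesis Gsym : forall x y, G x y = G y x.
Hypothesis Gdisj : [disjoint U & Rp].
Hypothesis Gbip : forall x y, G x y ->
  ((x \in U) && (y \in Rp)) || ((x \in Rp) && (y \in U)).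

Definition bad k u := #|[set S : {ffun 'I_k -> V} | [forall i, S i \in NG G [set u]] &&
        ~~ rich Gam G U Rp eps [set u] S]|.
Definition XS k (S : {ffun 'I_k -> V}) := [set u in U | [forall i, S i \in NG G [set u]] &&
        ~~ rich Gam G U Rp eps [set u] S].

Lemma NG1 u : NG G [set u] = [set y | G u y].
Proof.
apply/setP => y; rewrite !inE.
apply/forall_inP/idP => [h|h x /set1P ->//]; exact: h (set11 u).
Qed.

Lemma double_count k :
  (\sum_(u in U) bad k u = \sum_(S : {ffun 'I_k -> V}) #|XS k S|)%N.
Proof.
rewrite /bad.
rewrite (eq_bigr (fun u => \sum_(S : {ffun 'I_k -> V})
   (if [forall i, S i \in NG G [set u]] && ~~ rich Gam G U Rp eps [set u] S then 1 else 0))%N);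
  last first.
  move=> u _; rewrite -sum1_card big_mkcond /=; apply: eq_bigr => S _.
  by rewrite inE.
rewrite exchange_big /=; apply: eq_bigr => S _.
by rewrite -big_mkcondr sum1_card; apply: eq_card => u; rewrite !inE.
Qed.

Lemma XS_F k S u : u \in XS k S -> forall i, S i \in Rp.
Proof.
rewrite inE => /andP[uU /andP[/forallP h _]] i.
have := h i; rewrite NG1 inE => /Gbip /orP[/andP[]//|/andP[uR _]].
by rewrite (disjointFr Gdisj uU) in uR.
Qed.

Lemma XS_sub k S : XS k S \subset NG G [set S i | i : 'I_k].
Proof.
apply/subsetP => u; rewrite inE => /andP[_ /andP[/forallP h _]].
rewrite inE; apply/forall_inP => x /imsetP[i _ ->].
by have := h i; rewrite NG1 inE Gsym.
Qed.

Lemma XS_bound k S : sparse Gam c t -> 0 < c -> 0 < t ->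
  c * t <= 2 * (eps * #|U|%:R * (qdens R G U Rp) ^+ k) ->
  (#|XS k S|)%:R <= 2 * (eps * #|U|%:R * (qdens R G U Rp) ^+ k) / c + t.
Proof.
move=> sp c0 t0 cth.
have := @sparse_bound R V Gam c t _ _ _ sp c0 t0 cth (XS_sub k S).
apply=> x; rewrite inE => /andP[_ /andP[_]].
by rewrite /rich -ltNge.
Qed.


Lemma perk k (d : nat) (a : R) : sparse Gam c t -> 0 < c -> 0 < t -> 0 < beta ->
  0 < delta -> reduced delta G U Rp -> eps = c * a -> 0 < a ->
  (0 < bip_edges G U Rp)%N -> t <= a * #|U|%:R * (qdens R G U Rp) ^+ d ->
  (0 < k)%N -> (k <= d)%N ->
  #|[set u in U | ~~ good Gam G U Rp beta eps k [set u]]|%:R * (beta * delta ^+ k)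
    <= 3 * a * #|U|%:R.
Proof.
move=> sp c0 t0 b0 dl0 red epsE a0 E0 ht k0 kd.
set B := [set u in U | _].
set q := qdens R G U Rp.
set m := (#|U|%:R : R); set r := (#|Rp|%:R : R).
have Ele : (bip_edges G U Rp <= #|U| * #|Rp|)%N.
  rewrite -cardsX; apply: subset_leq_card; apply/subsetP => p.
  by rewrite !inE -andbA => /and3P[h1 h2 _]; rewrite h1 h2.
have mr0 : (0 < #|U| * #|Rp|)%N by apply: leq_trans Ele.
have m0 : 0 < m by rewrite ltr0n; move: mr0; rewrite muln_gt0 => /andP[].
have r0 : 0 < r by rewrite ltr0n; move: mr0; rewrite muln_gt0 => /andP[].
have q0 : 0 < q by rewrite /q /qdens divr_gt0 ?mulr_gt0 // ltr0n.
have q1 : q <= 1.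
  by rewrite /q /qdens ler_pdivrMr ?mulr_gt0 // mul1r -natrM ler_nat.
have qk : q ^+ d <= q ^+ k by apply: ler_wiXn2l => //; exact: ltW.
have qkr : q * r = (bip_edges G U Rp)%:R / m.
  by rewrite /q /qdens; field; rewrite !gt_eqF.
have htk : t <= a * m * q ^+ k.
  apply: (le_trans ht); rewrite -!mulrA ler_pM2l // ler_pM2l //.
have cth : c * t <= 2 * (eps * m * q ^+ k).
  rewrite epsE.
  have -> : 2 * (c * a * m * q ^+ k) = c * (a * m * q ^+ k) + c * (a * m * q ^+ k) by ring.
  apply: le_trans (ler_wpM2l (ltW c0) htk) _; rewrite lerDl.
  apply: mulr_ge0; first exact: ltW.
  apply: mulr_ge0; last by apply: exprn_ge0; exact: ltW.
  apply: mulr_ge0; exact: ltW.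
have hXS : forall S : {ffun 'I_k -> V}, (#|XS k S|)%:R <= 3 * a * m * q ^+ k.
  move=> S; apply: (le_trans (XS_bound k S sp c0 t0 cth)).
  rewrite epsE.
  have -> : 2 * (c * a * m * q ^+ k) / c = 2 * (a * m * q ^+ k).
    by field; rewrite gt_eqF.
  move: htk; lra.
have hsum : ((\sum_(u in U) bad k u)%N)%:R <= r ^+ k * (3 * a * m * q ^+ k).
  rewrite double_count natr_sum.
  apply: (le_trans (y := \sum_(S : {ffun 'I_k -> V})
      (if S \in ffun_on Rp then 3 * a * m * q ^+ k else 0))).
    apply: ler_sum => S _; case: ifP => // /negP hS.
    suff -> : XS k S = set0 by rewrite cards0.
    apply/setP => u; rewrite in_set0; apply/negP => uX.
    by apply: hS; apply/ffun_onP => i; apply: XS_F uX i.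
  rewrite -big_mkcond /= sumr_const card_ffun_on card_ord.
  by rewrite -[_ *+ (#|Rp| ^ k)]mulr_natl natrX mulrC.
have hbad : forall u, u \in B ->
    beta * (delta * q * r) ^+ k < (bad k u)%:R.
  move=> u; rewrite inE => /andP[uU]; rewrite /good -ltNge.
  apply: le_lt_trans; rewrite ler_pM2l //; apply: lerXn2r.
  - by rewrite nnegrE; apply: mulr_ge0; [apply: mulr_ge0|]; apply: ltW.
  - by rewrite nnegrE ler0n.
  rewrite NG1 -mulrA qkr.
  by have /andP[+ _] := red u uU; rewrite /d_avg /degree.
have hmk : #|B|%:R * (beta * (delta * q * r) ^+ k) <= ((\sum_(u in U) bad k u)%N)%:R.
  rewrite natr_sum (big_setID B) /=.
  have -> : U :&: B = B by apply/setIidPr/subsetP => u; rewrite inE => /andP[].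
  apply: (@le_trans _ _ (\sum_(i in B) ((bad k i)%:R : R))); last first.
    by rewrite lerDl sumr_ge0.
  rewrite -sum1_card natr_sum mulr_suml; apply: ler_sum => u uB.
  by rewrite mul1r ltW // hbad.
have := le_trans hmk hsum.
clearbody q m r B.
rewrite !exprMn.
have qr0 : 0 < q ^+ k * r ^+ k by rewrite mulr_gt0 // exprn_gt0.
have -> : #|B|%:R * (beta * (delta ^+ k * q ^+ k * r ^+ k))
   = (#|B|%:R * (beta * delta ^+ k)) * (q ^+ k * r ^+ k) by ring.
have -> : r ^+ k * (3 * a * m * q ^+ k) = (3 * a * m) * (q ^+ k * r ^+ k) by ring.
by rewrite ler_pM2r.
Qed.

End Main.

Lemma ht_deriv (R : realType) (a C t m r q : R) (d : nat) :
  0 < a -> C = 1 + a^-1 -> 0 < t -> 0 < m -> 0 < r -> 0 <= q -> (0 < d)%N ->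
  C * r * powR m (1 - (d%:R)^-1) * powR t (d%:R)^-1 <= q * m * r ->
  t <= a * m * q ^+ d.
Proof.
move=> a0 CE t0 m0 r0 q0 d0 hE.
set s := powR m (d%:R)^-1; set p := powR t (d%:R)^-1.
have dn0 : (d%:R : R) != 0 by rewrite pnatr_eq0 -lt0n.
have ms : powR m (1 - (d%:R)^-1) * s = m.
  by rewrite /s -powRD ?subrK ?powRr1 ?ltW // implybE oner_eq0.
have s0 : 0 < s by apply: powR_gt0.
have C1 : 1 <= C by rewrite CE lerDl invr_ge0 ltW.
have hCp : C * p <= q * s.
  have : C * r * powR m (1 - (d%:R)^-1) * p * s <= q * m * r * s.
    by rewrite ler_pM2r.
  have -> : C * r * powR m (1 - (d%:R)^-1) * p * s
      = (C * p) * ((powR m (1 - (d%:R)^-1) * s) * r) by ring.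
  rewrite ms.
  have -> : q * m * r * s = (q * s) * (m * r) by ring.
  by rewrite ler_pM2r // mulr_gt0.
have hX := lerXn2r d (x := C * p) (y := q * s).
have pd : p ^+ d = t.
  rewrite -powR_mulrn ?powR_ge0 // /p -powRrM mulVf // powRr1 //; exact: ltW.
have sd : s ^+ d = m.
  rewrite -powR_mulrn ?powR_ge0 // /s -powRrM mulVf // powRr1 //; exact: ltW.
have h : (C * p) ^+ d <= (q * s) ^+ d.
  apply: hX => //; rewrite nnegrE; apply: mulr_ge0 => //.
  - exact: le_trans C1.
  - exact: powR_ge0.
  - exact: ltW.
move: h; rewrite !exprMn pd sd => h.
have Cd : a^-1 <= C ^+ d.
  apply: (@le_trans _ _ C); first by rewrite CE lerDr.
  by rewrite -{1}(expr1 C) ler_weXn2l.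
have h2 : a^-1 * t <= q ^+ d * m.
  apply: (@le_trans _ _ (C ^+ d * t)) => //; rewrite ler_pM2r //.
have e : a * (a^-1 * t) = t by rewrite mulrA mulfV ?mul1r // gt_eqF.
rewrite -e -mulrA ler_pM2l // mulrC.
by rewrite mulrC (mulrC m).
Qed.

Theorem lemma3p4 (R : realType) (VH : finType) (H : rel VH) (delta : R) :
  simple_graph H ->
  let kappa : R := 1 + (#|VH|%:R)^-1 in
  0 < delta -> delta < 4^-1 ->
  powR delta (1 - kappa^-1) < 1 - 2 * delta ->
  forall (c beta : R) (d : nat),
  0 < c -> c < 2^-1 -> 0 < beta -> (0 < d)%N ->
  exists C eps : R, 0 < C /\ 0 < eps /\
  forall (V : finType) (Gam G : rel V) (U Rp : {set V}) (t : R),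
    0 < t ->
    simple_graph Gam -> sparse Gam c t ->
    bipartite_subgraph Gam G U Rp ->
    reduced delta G U Rp ->
    C * #|Rp|%:R * powR (#|U|%:R) (1 - (d%:R)^-1) * powR t (d%:R)^-1
      <= (bip_edges G U Rp)%:R ->
    (#|U|%:R <= 2 * #|[set u in U | [forall k : 'I_d.+1,
        (0 < (k : nat))%N ==> good Gam G U Rp beta eps k [set u]]]|%:R :> R).
Proof.
move=> _ kappa dl0 dl4 _ c beta d c0 _ b0 d0.
have dR0 : (0 : R) < d%:R by rewrite ltr0n.
have dl1 : delta <= 1 by apply: ltW; apply: (lt_trans dl4); rewrite invf_lt1 // ltr1n.
pose a := beta * delta ^+ d / (6 * d%:R).
have a0 : 0 < a by rewrite /a divr_gt0 ?mulr_gt0 // exprn_gt0.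
exists (1 + a^-1), (c * a); split; first by rewrite addr_gt0 // invr_gt0.
split; first by rewrite mulr_gt0.
move=> V Gam G U Rp t t0 _ sp [[Gsym _] [disj [_ bip]]] red hE.
set Gd := [set u in U | _].
set m := (#|U|%:R : R).
have m0 : 0 <= m by rewrite ler0n.
pose B (j : nat) := [set u in U | ~~ good Gam G U Rp beta (c * a) j.+1 [set u]].
have key : forall i : 'I_d, #|B i|%:R <= m / (2 * d%:R).
  move=> i; have [E0|E0] := posnP (bip_edges G U Rp).
    suff -> : B i = set0 by rewrite cards0 divr_ge0 // mulr_ge0.
    apply/setP => u; rewrite in_set0 inE; apply/negP => /andP[uU].
    apply/negP/negPn; rewrite /good.
    have -> : [set S : {ffun 'I_i.+1 -> V} | [forall i0, S i0 \in NG G [set u]] &&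
        ~~ rich Gam G U Rp (c * a) [set u] S] = set0.
      apply/setP => S; rewrite in_set0 inE; apply/negP => /andP[/forallP /(_ ord0)].
      rewrite NG1 inE => Guy.
      have := red u uU => /andP[_]; rewrite /d_avg E0 mul0r mulr0.
      rewrite /degree leNgt => /negP h _; apply: h.
      by rewrite ltr0n card_gt0; apply/set0Pn; exists (S ord0); rewrite inE.
    by rewrite cards0; apply: mulr_ge0; [exact: ltW | apply: exprn_ge0; exact: ler0n].
  have Ele : (bip_edges G U Rp <= #|U| * #|Rp|)%N.
    rewrite -cardsX; apply: subset_leq_card; apply/subsetP => p.
    by rewrite !inE -andbA => /and3P[h1 h2 _]; rewrite h1 h2.
  have mr0 : (0 < #|U| * #|Rp|)%N by apply: leq_trans Ele.
  have m0' : 0 < m by rewrite ltr0n; move: mr0; rewrite muln_gt0 => /andP[].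
  have r0 : (0 : R) < #|Rp|%:R by rewrite ltr0n; move: mr0; rewrite muln_gt0 => /andP[].
  have ht : t <= a * m * (qdens R G U Rp) ^+ d.
    apply: (@ht_deriv R a (1 + a^-1) t m #|Rp|%:R (qdens R G U Rp) d a0 erefl t0 m0' r0) => //.
      by rewrite /qdens divr_ge0 // mulr_ge0 // ler0n.
    apply: (le_trans hE); rewrite le_eqVlt; apply/orP; left; apply/eqP.
    by rewrite /qdens; field; rewrite !gt_eqF.
  have := @perk R V Gam G U Rp c t (c * a) beta delta Gsym disj bip i.+1 d a sp c0 t0 b0 dl0 red erefl a0 E0 ht
    (ltn0Sn _) (ltn_ord i).
  rewrite -/m -/(B i) => h.
  have hd : delta ^+ d <= delta ^+ i.+1.
    by apply: ler_wiXn2l; [exact: ltW dl0 | exact: dl1 | exact: ltn_ord].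
  have h' : #|B i|%:R * (beta * delta ^+ d) <= 3 * a * m.
    apply: le_trans h; apply: ler_wpM2l; first by rewrite ler0n.
    by rewrite ler_pM2l.
  have bd0 : 0 < beta * delta ^+ d by rewrite mulr_gt0 // exprn_gt0.
  rewrite -(ler_pM2r bd0); apply: (le_trans h').
  by rewrite /a le_eqVlt; apply/orP; left; apply/eqP; field; rewrite !gt_eqF // exprn_gt0.
have sub : U :\: Gd \subset \bigcup_(i < d) B i.
  apply/subsetP => u; rewrite !inE => /andP[/negP nG uU].
  have : ~~ [forall k : 'I_d.+1, (0 < (k : nat))%N ==> good Gam G U Rp beta (c * a) k [set u]].
    by apply/negP => h; apply: nG; rewrite ?inE uU h.
  move=> /forallPn [k]; rewrite negb_imply => /andP[k0 ng].
  have kd : (k.-1 < d)%N by rewrite prednK // -ltnS.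
  apply/bigcupP; exists (Ordinal kd) => //.
  by rewrite inE uU /= prednK.
have hc := @card_bigcup_le V d B.
have hU := cardsID Gd U.
have eG : U :&: Gd = Gd by apply/setIidPr/subsetP => u; rewrite inE => /andP[].
rewrite eG in hU.
have hs : (#|U :\: Gd|%:R : R) <= m / 2.
  apply: (le_trans (y := (\sum_(i < d) #|B i|)%N%:R)).
    by rewrite ler_nat (leq_trans (subset_leq_card sub)).
  rewrite natr_sum (le_trans (ler_sum _ (fun i _ => key i))) // sumr_const card_ord.
  rewrite -mulr_natr le_eqVlt; apply/orP; left; apply/eqP; field.
  by rewrite gt_eqF.
move: hU => /(congr1 (fun n : nat => (n%:R : R))); rewrite natrD -/m => hU.
by move: hs; rewrite -hU; lra.
Qed.
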